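(* Let $d\ge3$, let $M\ge1$ be a real number, let $|\cdot|_v$ be an absolute value on $\overline{\mathbb Q}$, and let $\lambda,\alpha\in\overline{\mathbb Q}$. If $|\alpha|_v\ge|\lambda|_v/M\ge2M$, then for all integers $0\le n_0\le n$, $$\left|\frac{\log M_{n,v}}{d^n}-\frac{\log M_{n_0,v}}{d^{n_0}}\right|\le\frac{\log 2}{d^{n_0}(d-1)}.$$
   Context: Define $A_0=\alpha$, $B_0=1$, and for $n\ge0$, $A_{n+1}=A_n^d+\lambda B_n^d$, $B_{n+1}=A_nB_n^{d-1}$ (so $[A_n:B_n]$ is the $n$-th iterate of $\alpha$ under $z\mapsto(z^d+\lambda)/z$). Set $M_{n,v}=\max\{|A_n|_v,|B_n|_v\}$. *)

(* Defs.v *)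
From HB Require Import structures.
From mathcomp Require Import all_boot all_order all_algebra all_field.
From mathcomp Require Import all_classical all_reals all_analysis.
Set Implicit Arguments. Unset Strict Implicit. Unset Printing Implicit Defensive.
Import Order.TTheory GRing.Theory Num.Theory.
Local Open Scope ring_scope.

(* algC plays the role of \overline{Q}. *)

Definition is_absval (R : realType) (v : algC -> R) : Prop :=
  [/\ forall x, 0 <= v x,
      forall x, v x = 0 <-> x = 0,
      forall x y, v (x * y) = v x * v y &
      forall x y, v (x + y) <= v x + v y].

Fixpoint AB (d : nat) (lam alpha : algC) (n : nat) : algC * algC :=
  match n with
  | 0 => (alpha, 1)
  | n'.+1 => let: (A, B) := AB d lam alpha n' in
             (A ^+ d + lam * B ^+ d, A * B ^+ (d.-1))
  end.

Definition Mnv (R : realType) (v : algC -> R) (d : nat) (lam alpha : algC)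
  (n : nat) : R :=
  Num.max (v (AB d lam alpha n).1) (v (AB d lam alpha n).2).

(* Main.v *)
Require Import Defs.
From HB Require Import structures.
From mathcomp Require Import all_boot all_order all_algebra all_field.
From mathcomp Require Import all_classical all_reals all_analysis.
From mathcomp Require Import ring lra.
Import Order.TTheory GRing.Theory Num.Theory.
Local Open Scope ring_scope.

Lemma pow_le_aux (R : realType) (x y : R) n : 0 <= x -> x <= y -> x ^+ n <= y ^+ n.
Proof.
move=> x0 xy; elim: n => [|n IH]; first by rewrite !expr0.
rewrite !exprS; apply: ler_pM => //; exact: exprn_ge0.
Qed.

Section Absval.
Context {R : realType} {v : algC -> R}.
Hypothesis hv : is_absval v.

Lemma v1 : v 1 = 1.
Proof.
case: hv => h0 hz hM _.
have := hM 1 1; rewrite mulr1 => e.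
have n0 : v 1 != 0 by apply/eqP => /hz /eqP; rewrite oner_eq0.
have : v 1 * (v 1 - 1) = 0 by rewrite mulrBr mulr1 -e subrr.
by move/eqP; rewrite mulf_eq0 (negPf n0) /= subr_eq0 => /eqP.
Qed.

Lemma vN1 : v (-1) = 1.
Proof.
case: hv => h0 hz hM _.
have := hM (-1) (-1); rewrite mulrNN mulr1 v1 => e.
have := h0 (-1) => p.
apply/le_anti/andP; split; nra.
Qed.

Lemma vN x : v (- x) = v x.
Proof. by case: hv => _ _ hM _; rewrite -mulN1r hM vN1 mul1r. Qed.

Lemma vX x n : v (x ^+ n) = v x ^+ n.
Proof.
case: hv => _ _ hM _; elim: n => [|n IH]; first by rewrite !expr0 v1.
by rewrite !exprS hM IH.
Qed.

Lemma vD_ge x y : v x - v y <= v (x + y).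
Proof.
case: hv => _ _ _ hT.
have := hT (x + y) (- y); rewrite addrK vN; lra.
Qed.

Lemma vD_le x y : v (x + y) <= v x + v y.
Proof. by case: hv. Qed.

Lemma vM x y : v (x * y) = v x * v y.
Proof. by case: hv. Qed.

Lemma vge0 x : 0 <= v x.
Proof. by case: hv. Qed.

End Absval.

Lemma AB_S d lam alpha n : AB d lam alpha n.+1 =
  ((AB d lam alpha n).1 ^+ d + lam * (AB d lam alpha n).2 ^+ d,
   (AB d lam alpha n).1 * (AB d lam alpha n).2 ^+ d.-1).
Proof. by rewrite /=; case: (AB d lam alpha n). Qed.

Section Main.
Context {R : realType} {d : nat} {M : R} {v : algC -> R} {lam alpha : algC}
  {L : R}.
Hypotheses (hd : (3 <= d)%N) (hM : 1 <= M) (hv : is_absval v)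
  (ha : L <= v alpha) (hl : 2 * M <= L) (hLM : v lam = L * M).

Ltac loc := have hl0 := hl; have hM0 := hM; have hLM0 := hLM; have ha0 := ha.
Definition a n := v (AB d lam alpha n).1.
Definition b n := v (AB d lam alpha n).2.

Lemma cLM : v lam = L * M.
Proof. exact: hLM. Qed.

Lemma step_bounds n : 0 < b n -> L * b n <= a n ->
  a n ^+ d - v lam * b n ^+ d <= a n.+1 /\ a n.+1 <= a n ^+ d + v lam * b n ^+ d.
Proof.
loc.
move=> b0 ab; rewrite /a AB_S /=.
have := vD_ge hv ((AB d lam alpha n).1 ^+ d) (lam * (AB d lam alpha n).2 ^+ d).
have := vD_le hv ((AB d lam alpha n).1 ^+ d) (lam * (AB d lam alpha n).2 ^+ d).
rewrite !(vM hv) !(vX hv) -/(a n) -/(b n) => h1 h2; split => //.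
Qed.

Lemma small n : 0 < b n -> L * b n <= a n -> v lam * b n ^+ d <= a n ^+ d / 2.
Proof.
loc.
move=> b0 ab.
have L1 : 1 <= L by lra.
have e : a n ^+ d >= L ^+ d * b n ^+ d.
  rewrite -exprMn; apply: pow_le_aux => //; apply: mulr_ge0; lra.
have e2 : L ^+ 2 <= L ^+ d.
  have -> : d = (2 + (d - 2))%N by rewrite subnKC // ltnW.
  rewrite exprD; apply: ler_peMr; first by apply: exprn_ge0; lra.
  exact: exprn_ege1.
have bd : 0 <= b n ^+ d by apply: exprn_ge0; lra.
rewrite cLM.
have : L * M <= L ^+ 2 / 2 by rewrite expr2; nra.
move=> h.
have : L ^+ 2 * b n ^+ d <= L ^+ d * b n ^+ d by nra.
nra.
Qed.

Lemma inv n : 0 < b n /\ L * b n <= a n.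
Proof.
loc.
elim: n => [|n [b0 ab]].
  rewrite /a /b /= v1 //; split; [lra|]; by rewrite mulr1.
have L1 : 2 <= L by lra.
have a0 : 0 < a n by nra.
have [lo _] := step_bounds n b0 ab.
have bS : b n.+1 = a n * b n ^+ d.-1 by rewrite /b AB_S /= (vM hv) (vX hv).
case: d hd lo bS => [|[|[|e]]] // _ lo bS.
rewrite bS; split.
  by apply: mulr_gt0 => //; apply: exprn_gt0.
apply: le_trans lo.
rewrite /= !exprSr -!exprSr.
have pq : b n ^+ e <= a n ^+ e by apply: pow_le_aux; nra.
have q0 : 0 <= b n ^+ e by apply: exprn_ge0; lra.
have h1 : L * a n * b n ^+ 2 + v lam * b n ^+ 3 <= a n ^+ 3.
  rewrite cLM.
  have s : L ^+ 2 * b n ^+ 2 <= a n ^+ 2 by rewrite -exprMn; apply: pow_le_aux; nra.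
  rewrite !expr2 !exprS expr0 !mulr1 in s *.
  have t : L * L * b n * b n * a n <= a n * (a n * a n) by nra.
  have u : L * b n * b n * (L * a n - a n - M * b n) >= 0.
    have : L * a n - a n - M * b n >= (L * L - L - M) * b n by nra.
    have : L * L - L - M >= 0 by nra.
    move=> h3 h4; have w : 0 <= L * a n - a n - M * b n by nra.
    apply: mulr_ge0 => //; apply: mulr_ge0; nra.
  nra.
rewrite !exprS expr0 !mulr1 in h1.
rewrite !(exprS _ e.+2) !(exprS _ e.+1) !(exprS _ e).
have ae : b n ^+ e * (L * a n * (b n * b n) + v lam * (b n * (b n * b n))) <=
          a n ^+ e * (a n * (a n * a n)).
  apply: ler_pM => //.
  have vl : 0 <= v lam by exact: vge0.
  have la : 0 <= L * a n by nra.
  have bb : 0 <= b n * b n by nra.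
  have bbb : 0 <= b n * (b n * b n) by nra.
  apply: addr_ge0; apply: mulr_ge0 => //.
lra.
Qed.

Lemma a_pos n : 0 < a n.
Proof. loc. have [b0 ab] := inv n; have : 2 <= L by lra. nra. Qed.

Lemma Mnv_a n : Mnv v d lam alpha n = a n.
Proof.
loc.
have [b0 ab] := inv n; have : 2 <= L by lra.
move=> L2; rewrite /Mnv max_l -/(a n) -/(b n) //; nra.
Qed.

Lemma a_bounds n : a n ^+ d / 2 <= a n.+1 <= 2 * a n ^+ d.
Proof.
loc.
have [b0 ab] := inv n.
have [lo hi] := step_bounds n b0 ab.
have s := small n b0 ab.
have : 0 <= v lam * b n ^+ d by apply: mulr_ge0; [exact: vge0| apply: exprn_ge0; lra].
have : 0 <= a n ^+ d by apply: exprn_ge0; have := a_pos n; lra.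
move=> *; apply/andP; split; lra.
Qed.

Definition D : R := d%:R.
Definition x n := ln (a n) / D ^+ n.

Lemma D_gt1 : 1 < D.
Proof. by rewrite /D ltr1n; apply: leq_trans hd. Qed.

Lemma lnstep n : `| ln (a n.+1) - ln (a n) * D | <= ln 2.
Proof.
loc.
have /andP [lo hi] := a_bounds n.
have p := a_pos n; have p1 := a_pos n.+1.
have pd : 0 < a n ^+ d by apply: exprn_gt0.
have two : (0:R) < 2 by lra.
have eq : ln (a n) * D = ln (a n ^+ d) by rewrite lnXn // mulr_natr.
rewrite eq.
have h1 : ln (a n.+1) <= ln 2 + ln (a n ^+ d).
  rewrite -lnM ?posrE //.
  by rewrite ler_ln ?posrE //; lra.
have h2 : ln (a n ^+ d) - ln 2 <= ln (a n.+1).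
  rewrite -ln_div ?posrE //.
  by rewrite ler_ln ?posrE //; apply: divr_gt0; lra.
rewrite ler_norml; apply/andP; split; lra.
Qed.

Lemma xstep n : `| x n.+1 - x n | <= ln 2 / D ^+ n.+1.
Proof.
loc.
have Dp : 0 < D ^+ n.+1 by apply: exprn_gt0; have := D_gt1; lra.
have D0 : D != 0 by have := D_gt1; apply: contraTneq => ->; lra.
have -> : x n.+1 - x n = (ln (a n.+1) - ln (a n) * D) / D ^+ n.+1.
  rewrite /x exprS; field; rewrite D0 /= expf_neq0 //.
rewrite normrM normfV (gtr0_norm Dp) ler_pM2r ?invr_gt0 //.
exact: lnstep.
Qed.

Lemma tele n0 k : `| x (n0 + k) - x n0 | <=
  ln 2 * (D ^+ k - 1) / (D ^+ (n0 + k) * (D - 1)).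
Proof.
loc.
have D1 := D_gt1.
have D0 : D != 0 by apply: contraTneq D1 => ->; lra.
have D10 : D - 1 != 0 by apply: contraTneq D1 => /eqP; rewrite subr_eq0 => /eqP ->; lra.
elim: k => [|k IH].
  by rewrite addn0 subrr normr0 expr0 subrr mulr0 mul0r.
rewrite addnS.
have -> : x (n0 + k).+1 - x n0 = (x (n0 + k).+1 - x (n0 + k)) + (x (n0 + k) - x n0).
  by rewrite addrA subrK.
apply: le_trans (ler_normD _ _) _.
apply: le_trans (lerD (xstep _) IH) _.
rewrite le_eqVlt; apply/orP; left; apply/eqP; rewrite !exprS; field.
by rewrite D0 D10 /= !expf_neq0.
Qed.

End Main.

Theorem proposition5p6 (R : realType) (d : nat) (M : R) (v : algC -> R)
    (lam alpha : algC) :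
  (3 <= d)%N -> 1 <= M -> is_absval v ->
  v lam / M <= v alpha -> 2 * M <= v lam / M ->
  forall n0 n : nat, (n0 <= n)%N ->
  `| ln (Mnv v d lam alpha n) / (d%:R ^+ n) -
     ln (Mnv v d lam alpha n0) / (d%:R ^+ n0) |
    <= ln 2 / (d%:R ^+ n0 * (d%:R - 1)).
Proof.
move=> hd hM hv ha hl n0 n /subnKC <-.
have hLM : v lam = v lam / M * M by rewrite mulfVK //; apply/eqP => M0; move: hM; rewrite M0; lra.
set L := v lam / M in ha hl hLM.
rewrite !(Mnv_a hd hM hv ha hl hLM).
apply: le_trans (tele hd hM hv ha hl hLM n0 (n - n0)) _.
set k := (n - n0)%N.
have D1 := D_gt1 (R:=R) hd.
set D : R := d%:R in D1 *.
have Dk : 0 < D ^+ k by apply: exprn_gt0; lra.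
have Dn : 0 < D ^+ n0 by apply: exprn_gt0; lra.
have l2 : 0 <= ln (2 : R) by apply: ln_ge0; lra.
have -> : ln 2 * (D ^+ k - 1) / (D ^+ (n0 + k) * (D - 1)) =
          ln 2 / (D ^+ n0 * (D - 1)) * ((D ^+ k - 1) / D ^+ k).
  rewrite exprD; field; apply/and3P; split; apply/negP; move/eqP; lra.
apply: ler_piMr.
  by apply: divr_ge0 => //; apply: mulr_ge0; lra.
by rewrite ler_pdivrMr // mul1r; lra.
Qed.
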